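(* Let $A$ be a domain, let $F$ be a strong filtration on $A$ by $(\mathbb{Z}^M,<_1)$, and let $G$ be a strong filtration on $\mathrm{gr}_F(A)$ by $(\mathbb{Z}^L,<_2)$ which is compatible with the grading induced by $F$. Then there is a strong filtration $F\circ G$ on $A$ by $(\mathbb{Z}^{M+L},<_1\circ<_2)$, where $<_1\circ<_2$ is the lexicographic order that first compares by $<_1$ and breaks ties with $<_2$, and its associated graded algebra is $\mathrm{gr}_{F\circ G}(A)=\mathrm{gr}_G(\mathrm{gr}_F(A))$.
   Context: A filtration by a totally ordered group $(\mathbb{Z}^k,<)$ is an increasing family of subspaces $F_{\le w}$ with $F_{\le w}F_{\le u}\subset F_{\le w+u}$ and union the whole algebra; it is strong if its associated graded algebra $\bigoplus_w F_{\le w}/F_{<w}$ is a domain. Compatibility of $G$ with the grading means each graded piece $F_{\le w}/F_{<w}$ of $\mathrm{gr}_F(A)$ is itself filtered by the spaces of $G$. *)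

(* Defs.v *)
From HB Require Import structures.
From mathcomp Require Import all_boot all_order all_algebra.
Set Implicit Arguments. Unset Strict Implicit. Unset Printing Implicit Defensive.
Import Order.TTheory GRing.Theory Num.Theory.
Local Open Scope ring_scope.

Notation Zn n := 'rV[int]_n.

Definition ordered_group (n : nat) (lt : rel (Zn n)) : Prop :=
  [/\ forall w, ~~ lt w w,
      forall w u z, lt w u -> lt u z -> lt w z,
      forall w u, w != u -> lt w u || lt u w
    & forall w u z, lt w u -> lt (w + z) (u + z)].

Definition le_of (n : nat) (lt : rel (Zn n)) : rel (Zn n) :=
  fun w u => (w == u) || lt w u.

Definition lexlt (M L : nat) (lt1 : rel (Zn M)) (lt2 : rel (Zn L)) : rel (Zn (M + L)) :=
  fun x y => lt1 (lsubmx x) (lsubmx y)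
             || ((lsubmx x == lsubmx y) && lt2 (rsubmx x) (rsubmx y)).

Definition subspace (k : fieldType) (V : lmodType k) (S : V -> Prop) : Prop :=
  S 0 /\ forall (c : k) x y, S x -> S y -> S (c *: x + y).

Definition domain (R : nzRingType) : Prop :=
  forall a b : R, a * b = 0 -> a = 0 \/ b = 0.

Section Filt.
Variables (k : fieldType) (A : algType k) (n : nat) (lt : rel (Zn n)).

(* F w is the subspace F_{<= w}. *)
Definition filtration (F : Zn n -> A -> Prop) : Prop :=
  [/\ forall w, subspace (F w),
      forall w u, le_of lt w u -> forall a, F w a -> F u a,
      forall w u a b, F w a -> F u b -> F (w + u) (a * b)
    & forall a, exists w, F w a].

Definition Flt (F : Zn n -> A -> Prop) (w : Zn n) (a : A) : Prop :=
  exists u, lt u w /\ F u a.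

(* [is_gr F B sym]: the k-algebra B, together with the symbol maps
   sym w : F_{<=w} -> B (with kernel F_{<w}), is the associated graded algebra
   gr_F(A) = (+)_w F_{<=w}/F_{<w}; the image of sym w is the degree-w piece. *)
Definition is_gr (F : Zn n -> A -> Prop) (B : algType k) (sym : Zn n -> A -> B) : Prop :=
  [/\ forall w (c : k) a b, F w a -> F w b -> sym w (c *: a + b) = c *: sym w a + sym w b,
      forall w a, F w a -> (sym w a = 0 <-> Flt F w a),
      forall w u a b, F w a -> F u b -> sym w a * sym u b = sym (w + u) (a * b),
      forall x : B, exists s : seq (Zn n * A),
          [/\ uniq (map fst s), (forall p, p \in s -> F p.1 p.2)
            & x = \sum_(p <- s) sym p.1 p.2]
    & forall s : seq (Zn n * A), uniq (map fst s) -> (forall p, p \in s -> F p.1 p.2) ->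
          \sum_(p <- s) sym p.1 p.2 = 0 -> forall p, p \in s -> sym p.1 p.2 = 0].

End Filt.

(* A filtration G on gr_F(A) = B is compatible with the grading induced by F:
   every homogeneous component of an element of G_{<=v} lies in G_{<=v}. *)
Definition compatible (k : fieldType) (A : algType k) (M L : nat)
  (F : Zn M -> A -> Prop) (B : algType k) (sym : Zn M -> A -> B)
  (G : Zn L -> B -> Prop) : Prop :=
  forall v (s : seq (Zn M * A)), uniq (map fst s) -> (forall p, p \in s -> F p.1 p.2) ->
    G v (\sum_(p <- s) sym p.1 p.2) -> forall p, p \in s -> G v (sym p.1 p.2).

(* Main.v *)
Require Import Defs.
From HB Require Import structures.
From mathcomp Require Import all_boot all_order all_algebra.
Import GRing.Theory.
Local Open Scope ring_scope.
Set Implicit Arguments. Unset Strict Implicit.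

Section GrLemmas.
Variables (k : fieldType) (A : algType k) (n : nat) (lt : rel 'rV[int]_n).
Variables (F : 'rV[int]_n -> A -> Prop) (B : algType k) (sym : 'rV[int]_n -> A -> B).
Hypotheses (hF : filtration lt F) (hS : is_gr lt F sym).

Lemma F0 w : F w 0.
Proof. by case: hF => hs _ _ _; case: (hs w). Qed.

Lemma FD w a b : F w a -> F w b -> F w (a + b).
Proof. case: hF => hs _ _ _; case: (hs w) => _ h ha hb. by have := h 1 a b ha hb; rewrite scale1r. Qed.

Lemma Fsum w (I : eqType) (t : seq I) (f : I -> A) :
  (forall i, i \in t -> F w (f i)) -> F w (\sum_(i <- t) f i).
Proof.
elim: t => [|x t IH] h; first by rewrite big_nil; apply: F0.
rewrite big_cons; apply: FD; first by apply: h; rewrite inE eqxx.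
by apply: IH => i hi; apply: h; rewrite inE hi orbT.
Qed.

Lemma symD w a b : F w a -> F w b -> sym w (a + b) = sym w a + sym w b.
Proof. case: hS => h _ _ _ _ ha hb. by have := h w 1 a b ha hb; rewrite !scale1r. Qed.

Lemma sym0 w : sym w 0 = 0.
Proof.
have := @symD w 0 0 (F0 w) (F0 w); rewrite addr0 => h.
by apply: (addrI (sym w 0)); rewrite addr0 -h.
Qed.

Lemma symsum w (I : eqType) (t : seq I) (f : I -> A) :
  (forall i, i \in t -> F w (f i)) -> sym w (\sum_(i <- t) f i) = \sum_(i <- t) sym w (f i).
Proof.
elim: t => [|x t IH] h; first by rewrite !big_nil sym0.
have hx : F w (f x) by apply: h; rewrite inE eqxx.
have ht : forall i, i \in t -> F w (f i) by move=> i hi; apply: h; rewrite inE hi orbT.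
by rewrite !big_cons symD ?IH //; apply: Fsum.
Qed.

Lemma symFlt w a : F w a -> Flt lt F w a -> sym w a = 0.
Proof. by case: hS => _ h _ _ _ ha; apply: (proj2 (h w a ha)). Qed.

End GrLemmas.

Lemma partition_sum (R : nmodType) (I J : eqType) (s : seq I) (V : seq J) (g : I -> J) (f : I -> R) :
  uniq V -> (forall q, q \in s -> g q \in V) ->
  \sum_(q <- s) f q = \sum_(v <- V) \sum_(q <- s | g q == v) f q.
Proof.
move=> uV hV; rewrite (exchange_big_dep predT) //=.
apply: eq_big_seq => q hq.
rewrite -big_filter.
have -> : [seq v <- V | g q == v] = [:: g q].
  rewrite -(filter_pred1_uniq uV (hV q hq)); apply: eq_filter => v /=; by rewrite eq_sym.
by rewrite big_seq1.
Qed.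

Lemma lex_og (M L : nat) (lt1 : rel 'rV[int]_M) (lt2 : rel 'rV[int]_L) :
  ordered_group lt1 -> ordered_group lt2 -> ordered_group (lexlt lt1 lt2).
Proof.
case=> i1 t1 c1 a1 [i2 t2 c2 a2]; split.
- by move=> w; rewrite /lexlt (negbTE (i1 _)) (negbTE (i2 _)) eqxx.
- move=> w u z; rewrite /lexlt.
  move=> /orP[h1|/andP[/eqP e1 h1]] /orP[h2|/andP[/eqP e2 h2]].
  + by rewrite (t1 _ _ _ h1 h2).
  + by rewrite -e2 h1.
  + by rewrite e1 h2.
  + by rewrite e1 e2 eqxx (t2 _ _ _ h1 h2) orbT.
- move=> w u hne; rewrite /lexlt.
  case: (eqVneq (lsubmx w) (lsubmx u)) => e.
  + have hr : rsubmx w != rsubmx u.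
      apply: contra hne => /eqP er.
      by rewrite -(hsubmxK w) -(hsubmxK u) e er.
    rewrite e (negbTE (i1 _)) /=.
    by case/orP: (c2 _ _ hr) => ->; rewrite ?orbT.
  + by case/orP: (c1 _ _ e) => ->; rewrite ?orbT.
- move=> w u z; rewrite /lexlt !raddfD /=.
  move=> /orP[h|/andP[/eqP e h]]; first by rewrite a1.
  by rewrite e eqxx a2 // orbT.
Qed.

Section Main.
Variables (k : fieldType) (A : algType k) (M L : nat)
  (lt1 : rel 'rV[int]_M) (lt2 : rel 'rV[int]_L)
  (F : 'rV[int]_M -> A -> Prop) (B : algType k) (symF : 'rV[int]_M -> A -> B)
  (G : 'rV[int]_L -> B -> Prop) (C : algType k) (symG : 'rV[int]_L -> B -> C).
Hypotheses (hF : filtration lt1 F) (hSF : is_gr lt1 F symF)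
  (hG : filtration lt2 G) (hSG : is_gr lt2 G symG) (hcomp : compatible F symF G).

Definition HH (x : 'rV[int]_(M + L)) (a : A) : Prop :=
  F (lsubmx x) a /\ G (rsubmx x) (symF (lsubmx x) a).

Lemma surjH (t : seq ('rV[int]_L * B)) : uniq (map fst t) -> (forall p, p \in t -> G p.1 p.2) ->
 exists s : seq ('rV[int]_(M+L) * A),
   [/\ uniq (map fst s), (forall q, q \in s -> HH q.1 q.2),
       (forall q, q \in s -> rsubmx q.1 \in map fst t)
     & \sum_(p <- t) symG p.1 p.2 = \sum_(q <- s) symG (rsubmx q.1) (symF (lsubmx q.1) q.2)].
Proof.
elim: t => [|[v b] t IH] /=.
  by move=> _ _; exists [::]; split => //; rewrite !big_nil.
move=> /andP[vnot ut] hG'.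
have hvb : G v b by apply: (hG' (v,b)); rewrite inE eqxx.
have ht : forall p, p \in t -> G p.1 p.2 by move=> p hp; apply: hG'; rewrite inE hp orbT.
have [s' [us' hs' rs' es']] := IH ut ht.
case: hSF => _ _ _ hsurF _.
have [sb [usb hsb eb]] := hsurF b.
have hcb : forall p, p \in sb -> G v (symF p.1 p.2).
  by apply: (hcomp usb hsb); rewrite -eb.
exists (map (fun p => (row_mx p.1 v, p.2)) sb ++ s'); split.
- rewrite map_cat cat_uniq us' andbT.
  have -> : map fst (map (fun p => (row_mx p.1 v, p.2)) sb)
            = map (fun w => row_mx w v) (map fst sb) by rewrite -!map_comp.
  rewrite map_inj_uniq ?usb /=; last by move=> w1 w2 /eq_row_mx [].
  apply/hasPn => x /mapP [q hq ->]; apply/negP => /mapP [w _ e].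
  have : rsubmx q.1 = v by rewrite e row_mxKr.
  by move=> er; move: (rs' q hq); rewrite er (negbTE vnot).
- move=> q; rewrite mem_cat => /orP[/mapP [p hp ->]|]; last exact: hs'.
  by rewrite /HH /= row_mxKl row_mxKr; split; [exact: hsb | exact: hcb].
- move=> q; rewrite mem_cat => /orP[/mapP [p hp ->]| hq].
    by rewrite /= row_mxKr inE eqxx.
  by rewrite inE rs' ?orbT.
- rewrite big_cons big_cat big_map /= es' {1}eb (symsum hG hSG) //.
  by congr (_ + _); apply: eq_bigr => p _; rewrite row_mxKl row_mxKr.
Qed.

Lemma indepH (s : seq ('rV[int]_(M+L) * A)) : uniq (map fst s) -> (forall q, q \in s -> HH q.1 q.2) ->
  \sum_(q <- s) symG (rsubmx q.1) (symF (lsubmx q.1) q.2) = 0 ->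
  forall q, q \in s -> symG (rsubmx q.1) (symF (lsubmx q.1) q.2) = 0.
Proof.
move=> us hs e0.
pose V := undup (map (fun q => rsubmx q.1) s).
pose bv := fun v => \sum_(q <- s | rsubmx q.1 == v) symF (lsubmx q.1) q.2.
have hGbv : forall v, G v (bv v).
  move=> v; rewrite /bv -big_filter; apply: (Fsum hG) => q.
  by rewrite mem_filter => /andP[/eqP <- hq]; exact: (proj2 (hs q hq)).
have e1 : \sum_(p <- map (fun v => (v, bv v)) V) symG p.1 p.2 = 0.
  rewrite big_map; apply: (etrans _ e0); rewrite (partition_sum (s := s) (V := V) (g := fun q => rsubmx q.1)).
  - apply: eq_bigr => v _; rewrite /bv -big_filter (symsum hG hSG).
      by rewrite -[RHS]big_filter; apply: eq_big_seq => q; rewrite mem_filter => /andP[/eqP -> _].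
    by move=> q; rewrite mem_filter => /andP[/eqP <- hq]; exact: (proj2 (hs q hq)).
  - exact: undup_uniq.
  - by move=> q hq; rewrite mem_undup; apply: map_f.
have [_ hkerG _ _ hindG] := hSG.
have u1 : uniq (map fst (map (fun v => (v, bv v)) V)).
  by rewrite -map_comp map_id_in // undup_uniq.
have g1 : forall p, p \in map (fun v => (v, bv v)) V -> G p.1 p.2.
  by move=> p /mapP [w _ ->]; exact: hGbv.
have hz := hindG _ u1 g1 e1.
have hz' : forall v, v \in V -> symG v (bv v) = 0.
  by move=> v hv; apply: (hz (v, bv v)); apply: map_f.
move=> q hq.
have hv : rsubmx q.1 \in V by rewrite mem_undup; apply: map_f.
have := hz' _ hv.
move/(proj1 (hkerG _ _ (hGbv _))) => [v' [hv' hGv']].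
pose sF := map (fun q => (lsubmx q.1, q.2)) (filter (fun q' => rsubmx q'.1 == rsubmx q.1) s).
have uF : uniq (map fst sF).
  have -> : map fst sF = map lsubmx (filter (fun x => rsubmx x == rsubmx q.1) (map fst s)).
    by rewrite filter_map -!map_comp.
  rewrite map_inj_in_uniq ?filter_uniq //.
  move=> x y; rewrite !mem_filter => /andP[/eqP ex _] /andP[/eqP ey _] e.
  by rewrite -(hsubmxK x) -(hsubmxK y) e ex ey.
have hc := hcomp (v := v') uF.
have hc' : G v' (symF (lsubmx q.1) q.2).
  apply: (hc _ _ (lsubmx q.1, q.2)).
  - move=> p /mapP [q' hq' ->]; move: hq'; rewrite mem_filter => /andP[_ hq'].
    exact: (proj1 (hs q' hq')).
  - by rewrite /sF big_map big_filter; exact: hGv'.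
  - by apply: (map_f (fun q => (lsubmx q.1, q.2))); rewrite mem_filter eqxx hq.
apply: (symFlt hSG (proj2 (hs q hq))).
by exists v'.
Qed.

End Main.

Theorem mainTheorem4 (k : fieldType) (A : algType k) (M L : nat)
  (lt1 : rel 'rV[int]_M) (lt2 : rel 'rV[int]_L)
  (F : 'rV[int]_M -> A -> Prop) (B : algType k) (symF : 'rV[int]_M -> A -> B)
  (G : 'rV[int]_L -> B -> Prop) (C : algType k) (symG : 'rV[int]_L -> B -> C) :
  ordered_group lt1 -> ordered_group lt2 -> domain A ->
  (* F is a strong filtration on A, with associated graded B = gr_F(A) *)
  filtration lt1 F -> is_gr lt1 F symF -> domain B ->
  (* G is a strong filtration on B, with associated graded C = gr_G(gr_F(A)) *)
  filtration lt2 G -> is_gr lt2 G symG -> domain C ->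
  compatible F symF G ->
  exists H : 'rV[int]_(M + L) -> A -> Prop,
    [/\ ordered_group (lexlt lt1 lt2),
        filtration (lexlt lt1 lt2) H,
        is_gr (lexlt lt1 lt2) H (fun x a => symG (rsubmx x) (symF (lsubmx x) a))
      & domain C].
Proof.
move=> og1 og2 _ hF hSF _ hG hSG dC hcomp.
exists (HH F symF G); split => //.
- exact: lex_og.
- have [hFs hFm hFmul hFex] := hF.
  have [hGs hGm hGmul hGex] := hG.
  have [hlinF hkerF hmulF hsurF hindF] := hSF.
  split.
  + move=> x; split.
      by split; [apply: (F0 hF) | rewrite (sym0 hF hSF); apply: (F0 hG)].
    move=> c a b [ha1 ha2] [hb1 hb2]; split; first by case: (hFs (lsubmx x)) => _; apply.
    by rewrite hlinF //; case: (hGs (rsubmx x)) => _; apply.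
  + move=> x y /orP[/eqP <- //|/orP[h|/andP[/eqP e h]]] a [ha1 ha2].
    * have hle : F (lsubmx y) a by apply: (hFm (lsubmx x)) => //; rewrite /le_of h orbT.
      split => //; rewrite (symFlt hSF hle); first by apply: (F0 hG).
      by exists (lsubmx x).
    * rewrite /HH -e; split => //; apply: (hGm (rsubmx x)) => //.
      by rewrite /le_of h orbT.
  + move=> x y a b [ha1 ha2] [hb1 hb2]; rewrite /HH !raddfD /=; split; first exact: hFmul.
    by rewrite -hmulF //; exact: hGmul.
  + move=> a; case: (hFex a) => w hw; case: (hGex (symF w a)) => v hv.
    by exists (row_mx w v); rewrite /HH row_mxKl row_mxKr.
- have [hlinF hkerF hmulF hsurF hindF] := hSF.
  have [hlinG hkerG hmulG hsurG hindG] := hSG.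
  split.
  + by move=> x c a b [ha1 ha2] [hb1 hb2]; rewrite hlinF // hlinG.
  + move=> x a [ha1 ha2]; split.
    * move=> /(proj1 (hkerG _ _ ha2)) [v [hv1 hv2]].
      exists (row_mx (lsubmx x) v); split.
        by rewrite /lexlt row_mxKl row_mxKr eqxx hv1 orbT.
      by rewrite /HH row_mxKl row_mxKr.
    * move=> [y [/orP[h|/andP[/eqP e h]] [hy1 hy2]]].
        rewrite (symFlt hSF ha1); first exact: (sym0 hG hSG).
        by exists (lsubmx y).
      apply: (symFlt hSG ha2); exists (rsubmx y); split => //; by rewrite -e.
  + move=> x y a b [ha1 ha2] [hb1 hb2]; rewrite hmulG // hmulF // !raddfD; exact: erefl.
  + move=> z; have [t [ut ht ez]] := hsurG z.
    have [s [us hs _ es]] := surjH hSF hG hSG hcomp ut ht.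
    by exists s; split => //; rewrite ez es.
  + move=> s us hs e0 p hp.
    exact: (indepH hG hSG hcomp us hs e0 hp).
Qed.
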